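(* Let $f:\mathrm{I}\to\mathbb{R}$ be a convex function on an interval $\mathrm{I}\subseteq\mathbb{R}$, let $\Gamma\subseteq\mathcal{M}_b(\mathcal{H})$, and let $\P\in\mathcal{P}(\mathcal{H})$ be a fixed distribution (not depending on the sample). Let $\delta\in[0,1]$ and, for every sample $\mathcal{S}\in\mathcal{Z}^m$, let $\phi_{\mathcal{S}}\in\Gamma$. Then with probability at least $1-\delta$ over $\mathcal{S}\sim\mathcal{D}^m$, for all $\rho\in\mathcal{P}(\mathcal{H})$, \[ \mathbb{E}_{h\sim\rho}\phi_{\mathcal{S}}(h)\le D^{\Gamma}_{f}(\rho\|\P)+\ln\frac{1}{\delta}+\ln\Big[\mathbb{E}_{\mathcal{S}\sim\mathcal{D}^m}\exp\big(\Lambda^{\P}_{f}(\phi_{\mathcal{S}})\big)\Big]. \]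
   Context: $\mathcal{H}$ is a hypothesis space, $\mathcal{Z}$ a data space, $\mathcal{D}$ an unknown distribution on $\mathcal{Z}$, and $\mathcal{S}=\{z_1,\dots,z_m\}\sim\mathcal{D}^m$ an i.i.d. sample. $\mathcal{P}(\mathcal{H})$ is the set of probability distributions on $\mathcal{H}$ and $\mathcal{M}_b(\mathcal{H})$ the set of bounded measurable functions $\mathcal{H}\to\mathbb{R}$. $f^*(y)=\sup_{x\in\mathrm{I}}\{xy-f(x)\}$ is the Legendre transform of $f$. For $\varphi\in\mathcal{M}_b(\mathcal{H})$, $\Lambda^{\P}_{f}(\varphi):=\inf_{c\in\mathbb{R}}\{c+\mathbb{E}_{h\sim\P}f^*(\varphi(h)-c)\}$. The $(f,\Gamma)$-divergence is $D^{\Gamma}_f(\rho\|\P):=\sup_{\varphi\in\Gamma}\{\mathbb{E}_{h\sim\rho}\varphi(h)-\Lambda^{\P}_f(\varphi)\}$. *)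

(* Defs.v *)
From HB Require Import structures.
From mathcomp Require Import all_boot all_order all_algebra.
From mathcomp Require Import all_classical all_reals all_analysis measurable_realfun.
Set Implicit Arguments. Unset Strict Implicit. Unset Printing Implicit Defensive.
Import Order.TTheory GRing.Theory Num.Theory.
Import numFieldNormedType.Exports.
Local Open Scope classical_set_scope.
Local Open Scope ring_scope.

Definition Mb {d} {H : measurableType d} {R : realType} : set (H -> R) :=
  [set phi : H -> R | measurable_fun setT phi /\ exists M : R, forall h, `|phi h| <= M].

Definition legendre {R : realType} (I : interval R) (f : R -> R) (y : R) : \bar R :=
  ereal_sup [set ((x * y - f x)%R)%:E | x in [set` I]].

Local Open Scope ereal_scope.

Definition LambdaF {d} {H : measurableType d} {R : realType}
    (P : probability H R) (I : interval R) (f : R -> R) (phi : H -> R) : \bar R :=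
  ereal_inf [set c%:E + \int[P]_h legendre I f (phi h - c)%R | c in [set: R]].

Definition fGammaDiv {d} {H : measurableType d} {R : realType}
    (I : interval R) (f : R -> R) (Gamma : set (H -> R))
    (rho P : probability H R) : \bar R :=
  ereal_sup [set \int[rho]_h (phi h)%:E - LambdaF P I f phi | phi in Gamma].

(* mu is the m-fold product D^m of D on m-tuples: it agrees with the product
   of D on all measurable rectangles (this determines it uniquely) *)
Definition is_product_prob {d} {Z : measurableType d} {R : realType} (m : nat)
    (D : probability Z R) (mu : probability (m.-tuple Z) R) : Prop :=
  forall A : 'I_m -> set Z, (forall i, measurable (A i)) ->
    mu [set S : m.-tuple Z | forall i, A i (tnth S i)] = \prod_(i < m) D (A i).

(* Main.v *)
Require Import Defs.
From HB Require Import structures.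
From mathcomp Require Import all_boot all_order all_algebra.
From mathcomp Require Import all_classical all_reals all_analysis measurable_realfun.
From mathcomp Require Import lra.
Import Order.TTheory GRing.Theory Num.Theory.
Import numFieldNormedType.Exports.
Local Open Scope classical_set_scope.
Local Open Scope ring_scope.
Local Open Scope ereal_scope.
Import DualAddTheory.

Lemma expeR_meas (R : realType) : measurable_fun setT (@expeR R).
Proof.
move=> mT; apply: (measurability _ (ErealGenCInfty.measurableE R)) => //.
move=> _ [_ [r ->] <-].
rewrite setTI.
have -> : expeR @^-1` `[r%:E, +oo[%classic = `[lne r%:E, +oo[%classic.
  apply/seteqP; split => y; rewrite /preimage /= !in_itv /= !andbT => h1.
  - have [r0|r0] := leP r 0%R; first by rewrite leNye.
    rewrite -(lne_EFin r0) -(expeRK y) lee_lne // in_itv /= ?expeR_ge0 ?leey ?lee_fin ?ltW //.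
  - move: h1; have [r0|r0] := leP r 0%R => h1; first by apply: le_trans (expeR_ge0 _); rewrite lee_fin.
    move: h1; rewrite -(lne_EFin r0) -{1}(expeRK y) lee_lne // in_itv /= ?expeR_ge0 ?leey ?lee_fin ?ltW //.
exact: emeasurable_itv.
Qed.

Theorem theorem3p1 (R : realType)
    (dH : measure_display) (H : measurableType dH)
    (dZ : measure_display) (Z : measurableType dZ)
    (I : interval R) (f : R -> R)
    (hf : convex_function (E := R^o) [set` I] f)
    (Gamma : set (H -> R)) (hGamma : Gamma `<=` Mb)
    (P : probability H R)
    (m : nat) (D : probability Z R) (Dm : probability (m.-tuple Z) R)
    (hDm : is_product_prob D Dm)
    (delta : R) (hdelta0 : (0 <= delta)%R) (hdelta1 : (delta <= 1)%R)
    (phi : m.-tuple Z -> H -> R) (hphi : forall S, Gamma (phi S))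
    (hmeas : measurable_fun setT
               ((fun S => LambdaF P I f (phi S)) : m.-tuple Z -> \bar R)) :
  exists A : set (m.-tuple Z),
    [/\ measurable A, ((1 - delta)%R)%:E <= Dm A &
      forall S, A S -> forall rho : probability H R,
        \int[rho]_h (phi S h)%:E <=
          dual_adde (dual_adde (fGammaDiv I f Gamma rho P) (- lne delta%:E))
            (lne (\int[Dm]_S' expeR (LambdaF P I f (phi S'))))].
Proof.
set L := fun S => LambdaF P I f (phi S).
have mX : measurable_fun setT (fun S => expeR (L S)).
  exact: measurableT_comp (expeR_meas R) hmeas.
set E := \int[Dm]_S' expeR (LambdaF P I f (phi S')).
have E0 : 0 <= E by apply: integral_ge0 => x _; exact: expeR_ge0.
have afin : forall S (rho : probability H R), exists al : R,
    \int[rho]_h (phi S h)%:E = al%:E.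
  move=> S rho; have [mphi [M hM]] := hGamma _ (hphi S).
  have mphiE : measurable_fun setT (fun h => (phi S h)%:E) by exact: measurableT_comp.
  have : `|\int[rho]_h (phi S h)%:E| < +oo.
    apply: (le_lt_trans (le_abse_integral _ _ mphiE)) => //.
    apply: (@le_lt_trans _ _ (\int[rho]_h (cst `|M|%:E) h)).
      apply: ge0_le_integral => //.
      - exact: measurableT_comp.
      - by move=> h _; rewrite /= lee_fin (le_trans (hM h)) // ler_norm.
    rewrite integral_cst //; set t := (X in _ * X); have -> : t = 1 by exact: probability_setT.
    by rewrite mule1 ltey.
  rewrite -fin_num_abs => /fineK <-; by eexists.
have key : forall S (rho : probability H R),
    \int[rho]_h (phi S h)%:E - L S <= fGammaDiv I f Gamma rho P.
  move=> S rho; apply: ereal_sup_ubound; by exists (phi S).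
have [d0|dpos] := eqVneq delta 0%R.
  exists setT; split => //.
    set t := Dm _; have -> : t = 1 by exact: probability_setT.
    by rewrite d0 subr0.
  move=> S _ rho; rewrite d0 /= lexx /=; case: (fGammaDiv I f Gamma rho P) => [g| |] /=; rewrite ?daddye ?leey //.
have [Ey|Ey] := eqVneq E +oo.
  exists setT; split => //.
    set t := Dm _; have -> : t = 1 by exact: probability_setT.
    by rewrite lee_fin gerBl.
  move=> S _ rho; rewrite Ey /=; case: (dual_adde (fGammaDiv I f Gamma rho P) _) => [g| |] /=; rewrite ?leey //.
have Efin : E \is a fin_num by rewrite ge0_fin_numE // ltey.
set e := fine E; have Ee : E = e%:E by rewrite /e fineK.
have e0 : (0 <= e)%R by rewrite -lee_fin -Ee.
have dp : (0 < delta)%R by rewrite lt_neqAle eq_sym dpos hdelta0.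
set A := [set S | expeR (L S) <= (e / delta)%:E].
have mA : measurable A.
  by have := emeasurable_fun_infty_c measurableT mX ((e / delta)%:E); rewrite setTI.
have mX' : measurable_fun setT (fun S => expeR (L S)) by exact: mX.
have absX : \int[Dm]_(x in setT) `|expeR (L x)| = e%:E.
  rewrite -Ee; apply: eq_integral => x _; rewrite gee0_abs //; exact: expeR_ge0.
have hC : Dm (~` A) <= delta%:E.
  have [e00|epos] := eqVneq e 0%R.
    move: absX; rewrite e00 => /(ae_eq_integral_abs _ measurableT mX).
    case=> N [mN N0 sN].
    apply: (@le_trans _ _ (Dm N)); last by rewrite N0 lee_fin.
    apply: le_measure; rewrite ?inE //; first exact: measurableC.
    move=> x /= nAx; apply: sN => /= h; apply: nAx; rewrite /A /= h // e00 mul0r; exact: lexx.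
  have ep : (0 < e)%R by rewrite lt_neqAle eq_sym epos e0.
  have tp : (0 < e / delta)%R by rewrite divr_gt0.
  have := @le_integral_comp_abse _ _ _ Dm setT measurableT (fun x => expeR (L x)) (e / delta)%R id
    (@measurable_id _ _ setT) (fun r h => h) (fun x y _ _ h => h) mX tp.
  rewrite absX /=.
  have : Dm (~` A) <= Dm (setT `&` [set x | (e / delta)%:E <= `|expeR (L x)|]).
    apply: le_measure; rewrite ?inE //; first exact: measurableC.
      by have := emeasurable_fun_c_infty measurableT (measurableT_comp (@abse_measurable R setT) mX) ((e / delta)%:E).
    move=> x /= nAx; split => //; rewrite gee0_abs ?expeR_ge0 //.
    by apply: ltW; rewrite ltNge; apply/negP.
  move=> h1 h2.
  have := le_trans (lee_wpmul2l _ h1) h2.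
  have hle : Dm (~` A) <= 1 by exact: probability_le1 (measurableC mA).
  have hfin : Dm (~` A) \is a fin_num.
    by rewrite ge0_fin_numE // (le_lt_trans hle) // ltey.
  rewrite -(fineK hfin) -EFinM !lee_fin => h3.
  have {h3} := h3 (ltW tp).
  rewrite mulrAC ler_pdivrMr // ler_pM2l //.
exists A; split => //.
  have hc : Dm (~` A) = 1 - Dm A by exact: probability_setC.
  have hle : Dm A <= 1 by exact: probability_le1.
  have hfin : Dm A \is a fin_num.
    by rewrite ge0_fin_numE // (le_lt_trans hle) // ltey.
  move: hC; rewrite hc -(fineK hfin) -EFinB !lee_fin => hC.
  by rewrite lerBlDr -lerBlDl.
move=> S AS rho.
have [al hal] := afin S rho.
have k := key S rho; rewrite hal in k *.
rewrite (lne_EFin dp) -/E Ee.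
move: k AS; rewrite /A /=; case: (L S) => [l| |] /=.
- case: (fGammaDiv I f Gamma rho P) => [g| |] /=.
  + rewrite !lee_fin => k AS.
    have [e00|epos] := eqVneq e 0%R.
      by move: AS; rewrite e00 mul0r leNgt expR_gt0.
    have ep : (0 < e)%R by rewrite lt_neqAle eq_sym epos e0.
    rewrite [(e <= 0)%R]leNgt ep /= lee_fin.
    have : (l <= ln e - ln delta)%R.
      by rewrite -ln_div ?posrE // -{1}[l]expRK ler_ln ?posrE ?expR_gt0 ?divr_gt0.
    lra.
  + by move=> _ _; case: ifP => _ /=; exact: leey.
  + by rewrite leeNy_eq.
- by rewrite leye_eq.
- rewrite leye_eq => /eqP -> _ /=; case: ifP => _ /=; exact: leey.
Qed.
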